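(* Let $G$ be a directed graph on vertex set $V$, $|V|=n$, with edge weights in $\{1,\dots,M\}$, let $C>0$, and let $\pi:V\to[n]$ be a bijection such that $\pi(w(u,v))\le CMn\ln n/\|uv\|$ for all $u,v$ with $2\le|uv|<\infty$. Let $r\ge1$ and $\mathcal{H}_r=\{z\in V:\pi(z)\le CMn\ln n/r\}$. Define $A[u,z]=\|uz\|$ if $\|uz\|\le 2r$ and $u\ne z$, else $+\infty$ ($u\in V$, $z\in\mathcal{H}_r$), and $B[z,v]=\|zv\|$ if $\|zv\|\le 2r$ and $z\ne v$, else $+\infty$. Then for all $u,v\in V$ with $r\le\|uv\|<2r$: if $|uv|=1$, no $z\in\mathcal{H}_r$ satisfies $A[u,z]+B[z,v]=\|uv\|$; if $|uv|\ge2$, the vertex $z\in\mathcal{H}_r$ minimizing $\pi(z)$ subject to $A[u,z]+B[z,v]=\|uv\|$ exists and equals $w(u,v)$.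
   Context: $\|uv\|$ is the shortest path distance from $u$ to $v$; $|uv|$ is the largest number of edges in any shortest $u\to v$ path ($\infty$ if unreachable). For $2\le|uv|<\infty$, $w(u,v)$ is the vertex $w\notin\{u,v\}$ with $\|uv\|=\|uw\|+\|wv\|$ minimizing $\pi(w)$. *)

(* Defs.v *)
From mathcomp Require Export all_boot.
From Stdlib Require Export Reals ClassicalEpsilon.

Set Implicit Arguments.
Unset Strict Implicit.
Unset Printing Implicit Defensive.

Definition pbool (P : Prop) : bool :=
  if excluded_middle_informative P then true else false.

Section WeightedDigraph.
Variables (V : finType) (e : rel V) (wt : V -> V -> nat).

Fixpoint wlen (x : V) (p : seq V) : nat :=
  match p with
  | [::] => 0
  | y :: p' => wt x y + wlen y p'
  end.

Definition is_walk (u v : V) (p : seq V) : bool :=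
  path e u p && (last u p == v).

Definition reach (u v : V) : Prop := exists p, is_walk u v p.

Lemma reach_wlen (u v : V) :
  reach u v -> exists k, pbool (exists p, is_walk u v p /\ wlen u p = k).
Proof.
move=> [p Hp]; exists (wlen u p); rewrite /pbool.
case: excluded_middle_informative => // H; exfalso; apply: H; by exists p.
Qed.

(* ||uv||: shortest-path distance; None encodes +infinity (unreachable). *)
Definition dist (u v : V) : option nat :=
  match excluded_middle_informative (reach u v) with
  | left H => Some (ex_minn (reach_wlen H))
  | right _ => None
  end.

(* |uv|: largest number of edges of a shortest u->v walk (None if unreachable).
   Since edge weights are >= 1, a walk of weight d has at most d edges,
   so the maximum over k <= d is the maximum over all shortest walks. *)
Definition hops (u v : V) : option nat :=
  match dist u v with
  | Some d => Some (\max_(k < d.+1 |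
        pbool (exists p, is_walk u v p /\ wlen u p = d /\ size p = k)) k)
  | None => None
  end.

Definition oadd (a b : option nat) : option nat :=
  match a, b with
  | Some x, Some y => Some (x + y)
  | _, _ => None
  end.

(* w is w(u,v): the vertex w not in {u,v} with ||uv|| = ||uw|| + ||wv||
   minimizing pi(w). *)
Definition is_wvert (pi : V -> nat) (u v w : V) : Prop :=
  [/\ w != u, w != v, dist u v = oadd (dist u w) (dist w v), dist u v != None &
      forall w', w' != u -> w' != v -> dist u v = oadd (dist u w') (dist w' v) ->
        pi w <= pi w'].

Definition Amat (r : R) (u z : V) : option nat :=
  match dist u z with
  | Some a => if pbool (INR a <= 2 * r)%R && (u != z) then Some a else None
  | None => None
  end.

Definition Bmat (r : R) (z v : V) : option nat :=
  match dist z v with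
  | Some b => if pbool (INR b <= 2 * r)%R && (z != v) then Some b else None
  | None => None
  end.

Definition inH (pi : V -> nat) (C : R) (M : nat) (r : R) (z : V) : Prop :=
  (INR (pi z) <= C * INR M * INR #|V| * ln (INR #|V|) / r)%R.

End WeightedDigraph.

(* Main.v *)
Require Import Defs.
From Stdlib Require Import Lra Lia.
From mathcomp Require Import zify.
Set Implicit Arguments.
Unset Strict Implicit.

Section Aux.
Variables (V : finType) (e : rel V) (wt : V -> V -> nat).
Hypothesis wt_pos : forall x y, e x y -> 1 <= wt x y.

Lemma pboolE (P : Prop) : pbool P <-> P.
Proof. rewrite /pbool; case: excluded_middle_informative => H; split => //. Qed.

Lemma distP u v d : dist e wt u v = Some d ->
  (exists p, is_walk e u v p /\ wlen wt u p = d) /\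
  (forall p, is_walk e u v p -> d <= wlen wt u p).
Proof.
rewrite /dist; case: excluded_middle_informative => // H [<-].
case: ex_minnP => m /pboolE Hm Hmin; split => // p Hp.
apply: Hmin; apply/pboolE; by exists p.
Qed.

Lemma dist_walk u v p : is_walk e u v p ->
  exists d, dist e wt u v = Some d /\ d <= wlen wt u p.
Proof.
move=> Hp; rewrite /dist; case: excluded_middle_informative => [H|H];
  last by exfalso; apply H; exists p.
eexists; split; first reflexivity.
case: ex_minnP => m _ Hmin; apply Hmin; apply/pboolE; by exists p.
Qed.

Lemma wlen_cat u p q : wlen wt u (p ++ q) = wlen wt u p + wlen wt (last u p) q.
Proof. elim: p u => [|x p IH] u //=. by rewrite IH addnA. Qed.

Lemma walk_cat u w v p q : is_walk e u w p -> is_walk e w v q ->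
  is_walk e u v (p ++ q).
Proof.
rewrite /is_walk cat_path last_cat => /andP [Hp /eqP ->] /andP [Hq Hl].
by rewrite Hp Hq.
Qed.

Lemma size_wlen u p : path e u p -> size p <= wlen wt u p.
Proof.
elim: p u => [|x p IH] u //= /andP [Hux Hp].
have := wt_pos Hux; have := IH _ Hp. lia.
Qed.

Lemma hops_ge u v d h p : dist e wt u v = Some d -> hops e wt u v = Some h ->
  is_walk e u v p -> wlen wt u p = d -> size p <= h.
Proof.
move=> Hd; rewrite /hops Hd => -[<-] Hp Hw.
have Hs : size p < d.+1.
  rewrite ltnS -Hw; apply: size_wlen; by case/andP: Hp.
apply: (@leq_bigmax_cond _ _ (fun k : 'I_d.+1 => nat_of_ord k) (Ordinal Hs)).
apply/pboolE; by exists p.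
Qed.

Lemma hops_big u v d h : dist e wt u v = Some d -> hops e wt u v = Some h ->
  2 <= h -> exists p, [/\ is_walk e u v p, wlen wt u p = d & 2 <= size p].
Proof.
move=> Hd; rewrite /hops Hd => -[<-] Hh.
apply: NNPP => Hn.
have : \max_(k < d.+1 | pbool (exists p, is_walk e u v p /\ wlen wt u p = d
        /\ size p = k)) k <= 1.
  apply/bigmax_leqP => k /pboolE [p [Hp [Hw Hs]]].
  rewrite leqNgt; apply/negP => Hk; apply: Hn; exists p; split => //.
  by rewrite Hs.
move=> Hle; by have := leq_trans Hh Hle.
Qed.

Lemma Amat_some r u z a : Amat e wt r u z = Some a ->
  [/\ dist e wt u z = Some a, u != z & (INR a <= 2 * r)%R].
Proof.
rewrite /Amat; case: (dist e wt u z) => // b.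
case H: (pbool _ && _) => // -[<-].
by case/andP: H => /pboolE H1 H2.
Qed.

Lemma Bmat_some r u z a : Bmat e wt r u z = Some a ->
  [/\ dist e wt u z = Some a, u != z & (INR a <= 2 * r)%R].
Proof.
rewrite /Bmat; case: (dist e wt u z) => // b.
case H: (pbool _ && _) => // -[<-].
by case/andP: H => /pboolE H1 H2.
Qed.

Lemma Amat_intro r u z a : dist e wt u z = Some a -> u != z ->
  (INR a <= 2 * r)%R -> Amat e wt r u z = Some a.
Proof.
move=> Ha Huz Hle; rewrite /Amat Ha Huz andbT /pbool.
by case: excluded_middle_informative.
Qed.

Lemma Bmat_intro r u z a : dist e wt u z = Some a -> u != z ->
  (INR a <= 2 * r)%R -> Bmat e wt r u z = Some a.
Proof.
move=> Ha Huz Hle; rewrite /Bmat Ha Huz andbT /pbool.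
by case: excluded_middle_informative.
Qed.

Lemma oadd_some (x y : option nat) d : oadd x y = Some d ->
  exists a b, [/\ x = Some a, y = Some b & a + b = d].
Proof. case: x => [a|] //; case: y => [b|] // [<-]; by exists a, b. Qed.

End Aux.

Theorem mainTheorem10 (V : finType) (e : rel V) (wt : V -> V -> nat)
  (M : nat) (C : R) (pi : V -> nat) (r : R) :
  (forall x y, e x y -> 1 <= wt x y <= M) ->
  (0 < C)%R ->
  injective pi ->
  (forall x, 1 <= pi x <= #|V|) ->
  (forall u v d h w, dist e wt u v = Some d -> hops e wt u v = Some h ->
     2 <= h -> is_wvert e wt pi u v w ->
     (INR (pi w) <= C * INR M * INR #|V| * ln (INR #|V|) / INR d)%R) ->
  (1 <= r)%R ->
  forall u v d, dist e wt u v = Some d -> (r <= INR d < 2 * r)%R ->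
  (hops e wt u v = Some 1 ->
     forall z, inH pi C M r z ->
       oadd (Amat e wt r u z) (Bmat e wt r z v) <> Some d) /\
  (forall h, hops e wt u v = Some h -> 2 <= h ->
     exists z, [/\ inH pi C M r z,
       oadd (Amat e wt r u z) (Bmat e wt r z v) = Some d,
       (forall z', inH pi C M r z' ->
          oadd (Amat e wt r u z') (Bmat e wt r z' v) = Some d -> pi z <= pi z') &
       is_wvert e wt pi u v z]).
Proof.
move=> Hwt HC Hinj Hpi Hkey Hr u v d Hd [Hrd Hd2r].
have wpos : forall x y, e x y -> 1 <= wt x y.
  by move=> x y /Hwt /andP [].
split.
- move=> H1 z _ Hs.
  have [a [b [/Amat_some [Ha Huz _] /Bmat_some [Hb Hzv _] Hab]]] := oadd_some Hs.
  have [[p1 [Hp1 Hw1]] _] := distP Ha.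
  have [[p2 [Hp2 Hw2]] _] := distP Hb.
  have Hc := walk_cat Hp1 Hp2.
  have Hcw : wlen wt u (p1 ++ p2) = d.
    rewrite wlen_cat.
    case/andP: Hp1 => _ /eqP ->; by rewrite Hw1 Hw2.
  have := hops_ge wpos Hd H1 Hc Hcw.
  rewrite size_cat.
  have : 0 < size p1.
    case: p1 Hp1 {Hc Hcw Hw1} => // /andP [_ /eqP Hl].
    by rewrite /= in Hl; rewrite Hl eqxx in Huz.
  have : 0 < size p2.
    case: p2 Hp2 {Hc Hcw Hw2} => // /andP [_ /eqP Hl].
    by rewrite /= in Hl; rewrite Hl eqxx in Hzv.
  lia.
- move=> h Hh h2.
  have [[|w q] [Hp Hw Hs]] := hops_big Hd Hh h2 => //.
  case: q Hp Hw Hs => [|x q] // Hp Hw _.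
  have [[_ Hmin] _] := (distP Hd, tt).
  have [Hpa Hl] := andP Hp.
  have [Heuw Hpw'] := andP Hpa.
  have Hpw : is_walk e w v (x :: q) by apply/andP; split.
  have Hwu : w != u.
    apply/negP => /eqP Ewu; subst w.
    have := Hmin _ Hpw. have := wpos _ _ Heuw. move: Hw; rewrite /= => <-. lia.
  have Hwv : w != v.
    apply/negP => /eqP Ewv; subst w.
    have Hw1 : is_walk e u v [:: v] by rewrite /is_walk /= Heuw eqxx.
    have := Hmin _ Hw1. have := size_wlen wpos (proj1 (andP Hpw)).
    move: Hw; rewrite /= => <-. lia.
  have Hw0 : is_walk e u w [:: w] by rewrite /is_walk /= Heuw eqxx.
  have [a [Ha Hale]] := dist_walk wt Hw0.
  have [b [Hb Hble]] := dist_walk wt Hpw.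
  have Hab : a + b = d.
    have [[p1 [Hp1 Hw1]] _] := distP Ha.
    have [[p2 [Hp2 Hw2]] _] := distP Hb.
    have := Hmin _ (walk_cat Hp1 Hp2).
    rewrite wlen_cat; case/andP: Hp1 => _ /eqP ->; rewrite Hw1 Hw2.
    move: Hale Hble Hw; rewrite /= addn0 => ? ? <-. lia.
  pose S := [pred w' | (w' != u) && (w' != v) &&
              pbool (dist e wt u v = oadd (dist e wt u w') (dist e wt w' v))].
  have HSw : S w.
    rewrite /S /= Hwu Hwv /=; apply/pboolE; by rewrite Ha Hb Hd /= Hab.
  case: (arg_minnP pi HSw) => z /andP [/andP [Hzu Hzv] /pboolE Hz] HzS.
  have Hwz : is_wvert e wt pi u v z.
    split => //; first by rewrite Hd.
    move=> w' H1 H2 H3; apply: HzS; rewrite /S /= H1 H2 /=; by apply/pboolE.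
  have Hz' := Hz; rewrite Hd in Hz'.
  have [a' [b' [Ha' Hb' Hab']]] := oadd_some (esym Hz').
  have HdR : (0 < INR d)%R by lra.
  have HinH : inH pi C M r z.
    have K := Hkey _ _ _ _ _ Hd Hh h2 Hwz.
    rewrite /inH.
    set X := (C * INR M * INR #|V| * ln (INR #|V|))%R in K *.
    have Hp1 : (1 <= INR (pi z))%R.
      by apply: (le_INR 1); apply/leP; case/andP: (Hpi z).
    have HX : (0 <= X)%R.
      have : (0 < X / INR d)%R by lra.
      rewrite /Rdiv => H.
      have : (0 < X / INR d * INR d)%R by apply: Rmult_lt_0_compat.
      rewrite /Rdiv Rmult_assoc Rinv_l; lra.
    apply: (Rle_trans _ _ _ K); rewrite /Rdiv.
    apply: Rmult_le_compat_l => //.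
    apply: Rinv_le_contravar; lra.
  have Hale' : a' <= d by rewrite -Hab' leq_addr.
  have Hble' : b' <= d by rewrite -Hab' leq_addl.
  have HA : Amat e wt r u z = Some a'.
    apply: Amat_intro => //; first by rewrite eq_sym.
    have := le_INR a' d (elimT leP Hale'); clear -Hd2r; lra.
  have HB : Bmat e wt r z v = Some b'.
    apply: Bmat_intro => //.
    have := le_INR b' d (elimT leP Hble'); clear -Hd2r; lra.
  exists z; split => //.
  + by rewrite HA HB /= Hab'.
  + move=> z' _ Hs.
    have [a1 [b1 [/Amat_some [Ha1 Huz1 _] /Bmat_some [Hb1 Hzv1 _] Hab1]]] :=
      oadd_some Hs.
    apply: HzS; rewrite /S /= eq_sym Huz1 Hzv1 /=; apply/pboolE.
    by rewrite Hd Ha1 Hb1 /= Hab1.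
Qed.
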